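(* Let $\tilde\rho:=1-(\epsilon^-/\epsilon^+)^2$. For every $n\ge1$ and every bounded measurable $\varphi$, for every $\mu'\in\mathcal{P}$, every $N\ge1$ and every realization of the $N$-particle system, \[ \left|\Big(\prod_{p=0}^{n-1}\lambda_p^N\Big)^{-1}\mu'Q^N_{0,n}(\varphi)-\mu'(h^N_{0,n})\,\eta_n^N(\varphi)\right|\le2\|\varphi\|\tilde\rho^n\frac{\epsilon^+}{\epsilon^-}, \] \[ \left|\frac{\mu'Q^N_{0,n}(\varphi)}{\mu'Q^N_{0,n}(1)}-\eta_n^N(\varphi)\right|\le2\|\varphi\|\tilde\rho^n\left(\frac{\epsilon^+}{\epsilon^-}\right)^2. \]
   Context: Setting: $(\mathsf{X},\mathcal{B})$ is a measurable space with countably generated $\sigma$-algebra; $\mathcal{P}$ the probability measures. For a measure $\mu$, kernel $K$, function $\varphi$: $\mu(\varphi)=\int\varphi\,d\mu$, $K(\varphi)(x)=\int K(x,dy)\varphi(y)$, $\mu K(\cdot)=\int\mu(dx)K(x,\cdot)$; $1$ is the constant function one; $\|\varphi\|=\sup_x|\varphi(x)|$. $G:\mathsf{X}\to(0,\infty)$ bounded measurable, $M$ a Markov kernel, $Q(x,dy):=G(x)M(x,dy)$. Assumption (H) (in force): there is a probability measure $\nu$ such that for all $x$, $Q(x,\cdot)$ is equivalent to $\nu$ with density $q(x,x')$ satisfying $\epsilon^-\le q\le\epsilon^+$ for constants $0<\epsilon^-,\epsilon^+<\infty$. For $\eta\in\mathcal{P}$, $\Phi(\eta):=\eta Q/\eta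 Q(1)$. Particle system: fix $N\ge1$ and $\mu\in\mathcal{P}$; $\zeta_0^1,\dots,\zeta_0^N$ i.i.d. $\mu$; for $n\ge1$, conditionally on the past, the $\zeta_n^i$ are i.i.d. with law $\Phi(\eta^N_{n-1})$, where $\eta_n^N:=\frac1N\sum_{i=1}^N\delta_{\zeta_n^i}$. Define $\lambda_n^N:=\eta_n^N(G)$, $Q_n^N(x,dx'):=\frac{dQ(x,\cdot)}{d\Phi(\eta_{n-1}^N)}(x')\,\eta_n^N(dx')$ for $n\ge1$, $Q^N_{n,n}:=Id$, $Q^N_{p,n}:=Q^N_{p+1}\cdots Q^N_n$ for $p<n$, and $h^N_{n,n}:=1$, $h_{p,n}^N(x):=\frac{Q^N_{p,n}(1)(x)}{\eta^N_pQ^N_{p,n}(1)}$ for $0\le p<n$. *)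

(* Defs.v *)
From HB Require Import structures.
From mathcomp Require Import all_boot all_order all_algebra.
From mathcomp Require Import all_classical all_reals all_analysis.
Set Implicit Arguments. Unset Strict Implicit. Unset Printing Implicit Defensive.
Import Order.TTheory GRing.Theory Num.Theory.
Local Open Scope classical_set_scope.
Local Open Scope ring_scope.

Definition integ d (T : measurableType d) (R : realType)
  (mu : set T -> \bar R) (f : T -> R) : R :=
  fine (\int[mu]_x (f x)%:E)%E.

Definition supnorm (T : Type) (R : realType) (f : T -> R) : R :=
  sup [set `|f x| | x in setT].

Definition countably_generated d (T : measurableType d) : Prop :=
  exists F : nat -> set T, (@measurable d T) = <<s range F >>.

Section ParticleSystem.
Context d (T : measurableType d) (R : realType).
(* q: density of Q(x,.) = G(x) M(x,.) w.r.t. nu ;  G : potential *)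
Variables (q : T -> T -> R) (G : T -> R).
(* a realization of the N-particle system: zeta n i = zeta_n^i *)
Variables (N : nat) (zeta : nat -> 'I_N -> T).

Definition etaN (n : nat) (f : T -> R) : R :=
  N%:R^-1 * \sum_(i < N) f (zeta n i).

Definition lam (n : nat) : R := etaN n G.

(* density of Phi(eta_n^N) = eta_n^N Q / eta_n^N Q(1) w.r.t. nu, at x'
   (note eta Q(1) = eta(G) since Q(x,1) = G(x)) *)
Definition Phi_dens (n : nat) (x' : T) : R :=
  etaN n (fun z => q z x') / etaN n G.

(* dQ(x,.)/dPhi(eta_{n-1}^N)(x'), the version given by the densities *)
Definition RN (n : nat) (x x' : T) : R := q x x' / Phi_dens n.-1 x'.

Definition QN (n : nat) (f : T -> R) (x : T) : R :=
  etaN n (fun x' => RN n x x' * f x').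

(* Q_{p,n}^N = Q_{p+1}^N ... Q_n^N  (identity if n <= p) *)
Fixpoint QNpn (p n : nat) (f : T -> R) {struct n} : T -> R :=
  match n with
  | 0 => f
  | n'.+1 => if (p <= n')%N then QNpn p n' (QN n'.+1 f) else f
  end.

Definition hN (p n : nat) (x : T) : R :=
  if (p < n)%N then QNpn p n (fun=> 1) x / etaN p (QNpn p n (fun=> 1))
  else 1.

End ParticleSystem.

(* Main.v *)
Require Import Defs.
From HB Require Import structures.
From mathcomp Require Import all_boot all_order all_algebra.
From mathcomp Require Import all_classical all_reals all_analysis.
From mathcomp Require Import ring lra measurable_realfun.
Import Order.TTheory GRing.Theory Num.Theory.
Import numFieldNormedType.Exports.
Local Open Scope classical_set_scope.
Local Open Scope ring_scope.

Section Integ.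
Context d (T : measurableType d) (R : realType) (P : probability T R).

Definition bmf (f : T -> R) := measurable_fun setT f /\ exists K, forall x, `|f x| <= K.

Lemma bmf_int f : bmf f -> P.-integrable setT (EFin \o f).
Proof.
move=> [mf [K hK]]; apply/integrableP; split; first exact/measurable_EFinP.
apply: (@le_lt_trans _ _ ((`|K|)%:E * P setT)%E).
  apply: integral_le_bound => //.
  - exact/measurable_EFinP.
  - by apply: aeW => z _ /=; rewrite lee_fin (le_trans (hK z)) // ler_norm.
by rewrite probability_setT mule1 ltey.
Qed.

Lemma integE f : integ P f = Rintegral P setT f.
Proof. by []. Qed.

Lemma integ_cst c : integ P (fun=> c) = c.
Proof. rewrite integE Rintegral_cst //. have := @probability_setT _ _ _ P. move=> /= ->. by rewrite mulr1. Qed.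

Lemma integ_le f g : bmf f -> bmf g -> (forall x, f x <= g x) -> integ P f <= integ P g.
Proof.
move=> bf bg fg; rewrite !integE; apply: le_Rintegral => //; exact: bmf_int.
Qed.

Lemma bmf_cst c : bmf (fun=> c).
Proof. by split => //; exists `|c|. Qed.

Lemma integ_le_cst f K : bmf f -> (forall x, f x <= K) -> integ P f <= K.
Proof. by move=> bf fK; rewrite -[leRHS](integ_cst K); apply: integ_le => //; apply: bmf_cst. Qed.

Lemma integ_ge_cst f K : bmf f -> (forall x, K <= f x) -> K <= integ P f.
Proof. by move=> bf fK; rewrite -[leLHS](integ_cst K); apply: integ_le => //; apply: bmf_cst. Qed.

Lemma integ_scale f c : bmf f -> integ P (fun x => f x * c) = integ P f * c.
Proof. by move=> bf; rewrite !integE RintegralZr //; apply: bmf_int. Qed.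

Lemma bmf_lin f g c : bmf f -> bmf g -> bmf (fun x => f x - c * g x).
Proof.
move=> [mf [K hK]] [mg [L hL]]; split.
  by apply: measurable_funB => //; apply: measurable_funM.
exists (K + `|c| * L) => x; rewrite (le_trans (ler_normB _ _)) // lerD // normrM.
by rewrite ler_wpM2l.
Qed.

Lemma bmf_mulc f c : bmf f -> bmf (fun x => c * f x).
Proof.
move=> [mf [K hK]]; split; first by apply: measurable_funM.
by exists (`|c| * K) => x; rewrite normrM ler_wpM2l.
Qed.

Lemma integ_bound f g c b : bmf f -> bmf g ->
  (forall x, `|f x - c * g x| <= b * g x) ->
  `|integ P f - c * integ P g| <= b * integ P g.
Proof.
move=> bf bg h.
have -> : integ P f - c * integ P g = integ P (fun x => f x - c * g x).
  rewrite !integE RintegralB //; first (rewrite RintegralZl //; exact: bmf_int).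
  - exact: bmf_int.
  - by apply: bmf_int; apply: bmf_mulc.
rewrite integE (le_trans (le_normr_Rintegral _ _)) //.
  by apply: bmf_int; apply: bmf_lin.
rewrite -RintegralZl //; last by apply: bmf_int.
apply: le_Rintegral => //.
- apply: bmf_int; case: (@bmf_lin f g c bf bg) => mf [K hK]; split; first exact: measurableT_comp.
  by exists K => x; rewrite normr_id.
- by apply: bmf_int; exact: bmf_mulc.
Qed.

End Integ.
Arguments bmf {d T R}.

Section Part.
Context d (T : measurableType d) (R : realType).
Variables (q : T -> T -> R) (G : T -> R) (N : nat) (zeta : nat -> 'I_N -> T)
  (em ep : R).
Hypothesis N_ge1 : (1 <= N)%N.
Hypothesis hem : 0 < em.
Hypothesis q_bnd : forall x y, em <= q x y <= ep.
Hypothesis G_pos : forall x, 0 < G x.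

Let i0 : 'I_N := Ordinal N_ge1.

Lemma sum_gt0 (f : 'I_N -> R) : (forall i, 0 < f i) -> 0 < \sum_(i < N) f i.
Proof.
move=> hf; rewrite (bigD1 i0) //=; apply: (lt_le_trans (hf i0)).
by rewrite lerDl sumr_ge0 // => i _; apply: ltW.
Qed.

Lemma etaN_gt0 p (f : T -> R) : (forall x, 0 < f x) -> 0 < etaN zeta p f.
Proof.
move=> hf; rewrite /etaN mulr_gt0 //; last by apply: sum_gt0.
by rewrite invr_gt0 ltr0n.
Qed.

Lemma q_gt0 x y : 0 < q x y.
Proof. by case/andP: (q_bnd x y) => h _; apply: lt_le_trans h. Qed.

Lemma Phi_gt0 p y : 0 < Phi_dens q G zeta p y.
Proof. by rewrite /Phi_dens divr_gt0 //; apply: etaN_gt0 => x; [apply: q_gt0|]. Qed.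

Definition w k (i : 'I_N) : R := N%:R^-1 / Phi_dens q G zeta k.-1 (zeta k i).

Lemma w_gt0 k i : 0 < w k i.
Proof. by rewrite /w divr_gt0 ?Phi_gt0 // invr_gt0 ltr0n. Qed.

Lemma QN_E k (g : T -> R) x : QN q G zeta k g x =
  \sum_(i < N) w k i * q x (zeta k i) * g (zeta k i).
Proof.
rewrite /QN /etaN /RN mulr_sumr; apply: eq_bigr => i _; rewrite /w.
rewrite !mulrA; congr (_ * _); rewrite -!mulrA; congr (_ * _); exact: mulrC.
Qed.

Lemma QNpnS n (f : T -> R) : QNpn q G zeta 0 n.+1 f = QNpn q G zeta 0 n (QN q G zeta n.+1 f).
Proof. by []. Qed.

Lemma em_le_ep : em <= ep.
Proof. by case/andP: (q_bnd (zeta 0 i0) (zeta 0 i0)) => a b; apply: le_trans b. Qed.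

Lemma ep_gt0 : 0 < ep.
Proof. exact: lt_le_trans hem em_le_ep. Qed.

Definition Sw k (h : T -> R) := \sum_(i < N) w k i * h (zeta k i).

Lemma Sw_gt0 k h : (forall x, 0 < h x) -> 0 < Sw k h.
Proof. by move=> hh; apply: sum_gt0 => i; rewrite mulr_gt0 ?w_gt0. Qed.

Lemma QN_lb k h x : (forall x, 0 <= h x) -> em * Sw k h <= QN q G zeta k h x.
Proof.
move=> hh; rewrite QN_E /Sw mulr_sumr; apply: ler_sum => i _.
have w0 := w_gt0 k i; have h0 := hh (zeta k i); case/andP: (q_bnd x (zeta k i)) => a b.
have wh : 0 <= w k i * h (zeta k i) by rewrite mulr_ge0 // ltW.
nra.
Qed.

Lemma QN_ub k h x : (forall x, 0 <= h x) -> QN q G zeta k h x <= ep * Sw k h.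
Proof.
move=> hh; rewrite QN_E /Sw mulr_sumr; apply: ler_sum => i _.
have w0 := w_gt0 k i; have h0 := hh (zeta k i); case/andP: (q_bnd x (zeta k i)) => a b.
have wh : 0 <= w k i * h (zeta k i) by rewrite mulr_ge0 // ltW.
nra.
Qed.

Lemma QN_gt0 k h x : (forall x, 0 < h x) -> 0 < QN q G zeta k h x.
Proof.
move=> hh; apply: lt_le_trans (QN_lb k h x (fun y => ltW (hh y))).
by rewrite mulr_gt0 ?Sw_gt0.
Qed.

Lemma QN_step k f h c B : (forall x, 0 < h x) -> 0 <= B ->
  (forall x, `|f x - c * h x| <= B * h x) ->
  exists c', forall x, `|QN q G zeta k f x - c' * QN q G zeta k h x|
     <= (1 - em / ep) * B * QN q G zeta k h x.
Proof.
move=> hh B0 hfh.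
set S := Sw k h.
have S0 : 0 < S by apply: Sw_gt0.
set U := \sum_(i < N) w k i * (f (zeta k i) - c * h (zeta k i)).
exists (c + em / ep * U / S) => x.
set H := QN q G zeta k h x.
have H0 : 0 < H by apply: QN_gt0.
have Hub : H <= ep * S by apply: QN_ub => y; apply: ltW.
set e := em / ep.
have ep0 := ep_gt0.
have eHS : e * H / S <= em.
  have e0 : 0 <= e by rewrite /e divr_ge0 // ltW.
  apply: (@le_trans _ _ (e * (ep * S) / S)).
    apply: ler_wpM2r; first by rewrite invr_ge0 ltW.
    exact: ler_wpM2l.
  rewrite (_ : e * (ep * S) / S = em) //; rewrite /e; field.
  by apply/andP; split; apply/lt0r_neq0.
have eq1 : QN q G zeta k f x - (c + e * U / S) * H =
    \sum_(i < N) w k i * (f (zeta k i) - c * h (zeta k i)) *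
       (q x (zeta k i) - e * H / S).
  have -> : \sum_(i < N) w k i * (f (zeta k i) - c * h (zeta k i)) *
       (q x (zeta k i) - e * H / S) =
     \sum_(i < N) (w k i * q x (zeta k i) * f (zeta k i)) -
     c * \sum_(i < N) (w k i * q x (zeta k i) * h (zeta k i)) -
     U * (e * H / S).
    rewrite /U mulr_sumr mulr_suml -!sumrB; apply: eq_bigr => i _; ring.
  rewrite -!QN_E -/H; ring.
rewrite eq1 (le_trans (ler_norm_sum _ _ _)) //.
apply: (@le_trans _ _ (\sum_(i < N) B * (w k i * h (zeta k i) * (q x (zeta k i) - e * H / S)))).
  apply: ler_sum => i _.
  have beta0 : 0 <= q x (zeta k i) - e * H / S.
    case/andP: (q_bnd x (zeta k i)) => a _; rewrite subr_ge0; exact: le_trans a.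
  rewrite normrM normrM (ger0_norm beta0) (gtr0_norm (w_gt0 k i)).
  have := hfh (zeta k i); have := w_gt0 k i => w0 hi.
  have wb : 0 <= w k i * (q x (zeta k i) - e * H / S) by rewrite mulr_ge0 // ltW.
  nra.
rewrite -mulr_sumr.
have -> : \sum_(i < N) w k i * h (zeta k i) * (q x (zeta k i) - e * H / S) =
   H - e * H.
  have -> : H - e * H = \sum_(i < N) (w k i * q x (zeta k i) * h (zeta k i)) -
      S * (e * H / S) by rewrite -QN_E -/H; field; apply/lt0r_neq0.
  rewrite /S /Sw mulr_suml -sumrB; apply: eq_bigr => i _; ring.
by rewrite (_ : (1 - e) * B * H = B * (H - e * H)) //; ring.
Qed.

Lemma QNpn_gt0 n (h : T -> R) : (forall x, 0 < h x) -> forall x, 0 < QNpn q G zeta 0 n h x.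
Proof.
elim: n h => [|n IH] h hh x //=.
by apply: IH => y; apply: QN_gt0.
Qed.

Lemma QNpn_contr n (f h : T -> R) c B : (forall x, 0 < h x) -> 0 <= B ->
  (forall x, `|f x - c * h x| <= B * h x) ->
  exists c', forall x, `|QNpn q G zeta 0 n f x - c' * QNpn q G zeta 0 n h x|
     <= (1 - em / ep) ^+ n * B * QNpn q G zeta 0 n h x.
Proof.
elim: n f h c B => [|n IH] f h c B hh B0 hfh.
  by exists c => x; rewrite expr0 mul1r.
have [c1 hc1] := QN_step n.+1 f h c B hh B0 hfh.
have s0 : 0 <= 1 - em / ep.
  by rewrite subr_ge0 ler_pdivrMr ?mul1r ?em_le_ep ?ep_gt0.
have [c2 hc2] := IH (QN q G zeta n.+1 f) (QN q G zeta n.+1 h) c1 ((1 - em / ep) * B)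
   (fun x => QN_gt0 n.+1 h x hh) (mulr_ge0 s0 B0) hc1.
have e : (1 - em / ep) ^+ n.+1 * B = (1 - em / ep) ^+ n * ((1 - em / ep) * B).
  by rewrite exprSr mulrA.
by exists c2 => x; rewrite !QNpnS e.
Qed.

Lemma QN_ratio k h x y : (forall x, 0 < h x) ->
  QN q G zeta k h x <= ep / em * QN q G zeta k h y.
Proof.
move=> hh; have hh' : forall x, 0 <= h x by move=> z; apply: ltW.
apply: (le_trans (QN_ub k h x hh')).
apply: (@le_trans _ _ (ep / em * (em * Sw k h))).
  by rewrite mulrA mulfVK //; apply/lt0r_neq0.
apply: ler_wpM2l; last exact: QN_lb.
by rewrite divr_ge0 // ltW // ep_gt0.
Qed.

Lemma QNpn_ratio n h x y : (1 <= n)%N -> (forall x, 0 < h x) ->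
  QNpn q G zeta 0 n h x <= ep / em * QNpn q G zeta 0 n h y.
Proof.
elim: n h => [|n IH] h // _ hh.
case: n IH => [|n] IH; first exact: QN_ratio.
rewrite !(QNpnS n.+1); apply: IH => // z; exact: QN_gt0.
Qed.

Lemma etaN_cst p (c : R) : etaN zeta p (fun=> c) = c.
Proof.
rewrite /etaN sumr_const card_ord -(mulr_natl c) mulrA mulVf ?mul1r //.
by rewrite pnatr_eq0 -lt0n.
Qed.

Lemma etaN_le p (f g : T -> R) : (forall x, f x <= g x) -> etaN zeta p f <= etaN zeta p g.
Proof.
move=> fg; rewrite /etaN ler_wpM2l ?invr_ge0 ?ler0n //.
by apply: ler_sum => i _.
Qed.

Lemma etaN_bound p (F H : T -> R) c b : (forall x, `|F x - c * H x| <= b * H x) ->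
  `|etaN zeta p F - c * etaN zeta p H| <= b * etaN zeta p H.
Proof.
move=> hF.
have -> : etaN zeta p F - c * etaN zeta p H = etaN zeta p (fun x => F x - c * H x).
  by rewrite /etaN sumrB -mulr_sumr; ring.
have -> : b * etaN zeta p H = etaN zeta p (fun x => b * H x).
  by rewrite /etaN -mulr_sumr; ring.
rewrite /etaN normrM ger0_norm ?invr_ge0 ?ler0n //.
rewrite ler_wpM2l ?invr_ge0 ?ler0n //.
by apply: (le_trans (ler_norm_sum _ _ _)); apply: ler_sum => i _.
Qed.

Lemma etaN_QN p (f : T -> R) : etaN zeta p (QN q G zeta p.+1 f) = lam G zeta p * etaN zeta p.+1 f.
Proof.
rewrite /etaN /QN /etaN /RN.
under eq_bigr do rewrite mulr_sumr.
rewrite exchange_big /= mulrCA; congr (_ * _); rewrite mulr_sumr; apply: eq_bigr => i _.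
have hP := Phi_gt0 p (zeta p.+1 i).
have hl : 0 < lam G zeta p by apply: etaN_gt0.
have hq : 0 < etaN zeta p (fun z => q z (zeta p.+1 i)) by apply: etaN_gt0 => z; apply: q_gt0.
move: hP; rewrite /Phi_dens /= => hP.
rewrite -/(lam G zeta p).
set D := etaN zeta p (fun z => q z (zeta p.+1 i)) in hq hP *.
set L := lam G zeta p in hl hP *.
have -> : \sum_(j < N) N%:R^-1 * (q (zeta p j) (zeta p.+1 i) / (D / L) * f (zeta p.+1 i))
   = D / (D / L) * f (zeta p.+1 i).
  set X := D / L; rewrite /D /etaN mulr_sumr !mulr_suml; apply: eq_bigr => j _; ring.
by field; apply/andP; split; apply/lt0r_neq0.
Qed.

Lemma etaN_QNpn n (f : T -> R) : etaN zeta 0 (QNpn q G zeta 0 n f) =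
  (\prod_(p < n) lam G zeta p) * etaN zeta n f.
Proof.
elim: n f => [|n IH] f; first by rewrite big_ord0 mul1r.
by rewrite QNpnS IH etaN_QN big_ord_recr /= mulrA.
Qed.

Hypothesis mq2 : forall y, measurable_fun setT (fun x => q x y).

Lemma QN_bmf k g : bmf (QN q G zeta k g).
Proof.
split.
  have -> : QN q G zeta k g = (fun x => \sum_(i < N) w k i * q x (zeta k i) * g (zeta k i)).
    by apply/funext => x; exact: QN_E.
  apply: measurable_sum => i; apply: measurable_funM => //; apply: measurable_funM => //.
exists (\sum_(i < N) w k i * ep * `|g (zeta k i)|) => x.
rewrite QN_E (le_trans (ler_norm_sum _ _ _)) // ler_sum // => i _.
rewrite normrM normrM (gtr0_norm (w_gt0 k i)) (gtr0_norm (q_gt0 x (zeta k i))).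
apply: ler_wpM2r => //; apply: ler_wpM2l; first exact: ltW (w_gt0 k i).
by case/andP: (q_bnd x (zeta k i)).
Qed.

Lemma QNpn_bmf n h : (1 <= n)%N -> bmf (QNpn q G zeta 0 n h).
Proof.
elim: n h => [|n IH] h // _.
case: n IH => [|n] IH; first exact: QN_bmf.
by rewrite QNpnS; apply: IH.
Qed.

Lemma main (mu' : probability T R) n (hn : (1 <= n)%N) (phi : T -> R)
  (mphi : measurable_fun setT phi) (bphi : exists c : R, forall x, `|phi x| <= c) :
  let rho := 1 - (em / ep) ^+ 2 in
  `| (\prod_(p < n) lam G zeta p)^-1 * integ mu' (QNpn q G zeta 0 n phi)
     - integ mu' (hN q G zeta 0 n) * etaN zeta n phi |
    <= 2 * supnorm phi * rho ^+ n * (ep / em)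
  /\
  `| integ mu' (QNpn q G zeta 0 n phi) / integ mu' (QNpn q G zeta 0 n (fun=> 1))
     - etaN zeta n phi |
    <= 2 * supnorm phi * rho ^+ n * (ep / em) ^+ 2.
Proof.
move=> rho.
set A := supnorm phi.
have hA : forall x, `|phi x| <= A.
  move=> x; rewrite /A /supnorm; apply: ub_le_sup; last by exists x.
  case: bphi => c hc; exists c => _ [y _ <-]; exact: hc.
have A0 : 0 <= A by apply: le_trans (hA (zeta 0 i0)).
have ep0 := ep_gt0.
have emep := em_le_ep.
set s := 1 - em / ep.
have s0 : 0 <= s by rewrite /s subr_ge0 ler_pdivrMr ?mul1r.
have e01 : 0 <= em / ep <= 1.
  by apply/andP; split; [rewrite divr_ge0 // ltW | rewrite ler_pdivrMr ?mul1r].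
have srho : s ^+ n <= rho ^+ n.
  apply: lerXn2r; rewrite ?nnegrE //; first by rewrite /rho; nra.
  by rewrite /rho /s; nra.
set Q := QNpn q G zeta 0 n.
have hc0 : forall x, `|phi x - 0 * (fun=> 1 : R) x| <= A * (fun=> 1 : R) x.
  by move=> x; rewrite mul0r subr0 mulr1.
have [c' hc'] := QNpn_contr n phi (fun=> 1) 0 A (fun=> ltr01) A0 hc0.
rewrite -/Q -/s in hc'.
set Pi := \prod_(p < n) lam G zeta p.
have Pi0 : 0 < Pi by apply: prodr_gt0 => p _; apply: etaN_gt0.
have eQ1 : etaN zeta 0 (Q (fun=> 1)) = Pi by rewrite etaN_QNpn etaN_cst mulr1.
have eQp : etaN zeta 0 (Q phi) = Pi * etaN zeta n phi by rewrite etaN_QNpn.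
set eta := etaN zeta n phi.
have he : `|eta - c'| <= s ^+ n * A.
  have := etaN_bound 0 (Q phi) (Q (fun=> 1)) c' _ hc'; rewrite eQ1 eQp.
  move=> h; rewrite -(ler_pM2r Pi0) mulrC; move: h.
  by rewrite -/eta (mulrC c') -mulrBr normrM (gtr0_norm Pi0).
have bQp : bmf (Q phi) by apply: QNpn_bmf.
have bQ1 : bmf (Q (fun=> 1)) by apply: QNpn_bmf.
set Ip := integ mu' (Q phi).
set I1 := integ mu' (Q (fun=> 1)).
have hI : `|Ip - c' * I1| <= s ^+ n * A * I1 by apply: integ_bound.
have Q1pos : forall x, 0 < Q (fun=> 1) x by apply: QNpn_gt0 => _; exact: ltr01.
have I1ub : I1 <= ep / em * Pi.
  apply: integ_le_cst => // x.
  rewrite -eQ1 -(etaN_cst 0 (Q (fun=> 1) x)).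
  have -> : ep / em * etaN zeta 0 (Q (fun=> 1)) =
    etaN zeta 0 (fun y => ep / em * Q (fun=> 1) y) by rewrite /etaN -mulr_sumr; ring.
  apply: etaN_le => y; apply: QNpn_ratio => //= _; exact: ltr01.
have I1pos : 0 < I1.
  apply: (@lt_le_trans _ _ (em / ep * Q (fun=> 1) (zeta 0 i0))).
    by rewrite mulr_gt0 // divr_gt0.
  apply: integ_ge_cst => // x.
  have r := QNpn_ratio n (fun=> 1) (zeta 0 i0) x hn (fun=> ltr01).
  rewrite -/Q in r.
  apply: (@le_trans _ _ (em / ep * (ep / em * Q (fun=> 1) x))).
    by apply: ler_wpM2l => //; case/andP: e01.
  rewrite mulrA (_ : em / ep * (ep / em) = 1) ?mul1r //.
  by field; apply/andP; split; apply/lt0r_neq0.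
have hh : integ mu' (hN q G zeta 0 n) = I1 / Pi.
  have -> : hN q G zeta 0 n = fun x => Q (fun=> 1) x * Pi^-1.
    by apply/funext => x; rewrite /hN hn -/Q eQ1.
  by rewrite integ_scale.
rewrite hh -/Ip -/I1 -/eta.
set sA := s ^+ n * A in he hI.
have sA0 : 0 <= sA by rewrite mulr_ge0 // exprn_ge0.
have Pi1 : 0 < Pi^-1 by rewrite invr_gt0.
have I11 : 0 < I1^-1 by rewrite invr_gt0.
have epem0 : 0 <= ep / em by rewrite divr_ge0 // ltW.
have epem1 : 1 <= ep / em by rewrite ler_pdivlMr // mul1r.
have t : sA <= rho ^+ n * A by rewrite /sA ler_wpM2r.
have rA0 : 0 <= rho ^+ n * A by apply: le_trans t.
split.
  have -> : Pi^-1 * Ip - I1 / Pi * eta = Pi^-1 * ((Ip - c' * I1) - I1 * (eta - c')).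
    by ring.
  rewrite normrM (gtr0_norm Pi1).
  have h1 : `|Ip - c' * I1 - I1 * (eta - c')| <= 2 * sA * I1.
    apply: (le_trans (ler_normB _ _)); rewrite normrM (gtr0_norm I1pos).
    have : I1 * `|eta - c'| <= I1 * sA by rewrite ler_pM2l.
    move: hI; lra.
  apply: (@le_trans _ _ (Pi^-1 * (2 * sA * I1))).
    by rewrite ler_pM2l.
  have h2 : Pi^-1 * I1 <= ep / em.
    by rewrite mulrC ler_pdivrMr.
  rewrite (_ : Pi^-1 * (2 * sA * I1) = 2 * sA * (Pi^-1 * I1)); last by ring.
  apply: (@le_trans _ _ (2 * sA * (ep / em))).
    by apply: ler_wpM2l => //; rewrite mulr_ge0.
  nra.
have -> : Ip / I1 - eta = (Ip - c' * I1) / I1 - (eta - c').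
  by field; apply/lt0r_neq0.
apply: (le_trans (ler_normB _ _)).
have h3 : `|(Ip - c' * I1) / I1| <= sA.
  by rewrite normrM (gtr0_norm I11) ler_pdivrMr.
have k1 : 1 <= (ep / em) ^+ 2 by rewrite expr2; nra.
nra.
Qed.


End Part.

Theorem theorem2 (d : measure_display) (T : measurableType d) (R : realType)
  (hcg : countably_generated T)
  (G : T -> R) (M : R.-pker T ~> T) (nu : probability T R)
  (q : T -> T -> R) (em ep : R)
  (mG : measurable_fun setT G) (G_pos : forall x, 0 < G x)
  (G_bnd : exists c : R, forall x, G x <= c)
  (hem : 0 < em) (hep : 0 < ep)
  (q_bnd : forall x y, em <= q x y <= ep)
  (mq1 : forall x, measurable_fun setT (q x))
  (mq2 : forall y, measurable_fun setT (fun x => q x y))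
  (hQ : forall x (A : set T), measurable A ->
     ((G x)%:E * M x A = \int[nu]_(y in A) (q x y)%:E)%E)
  (n : nat) (hn : (1 <= n)%N)
  (phi : T -> R) (mphi : measurable_fun setT phi)
  (bphi : exists c : R, forall x, `|phi x| <= c)
  (mu' : probability T R) (N : nat) (N_ge1 : (1 <= N)%N)
  (zeta : nat -> 'I_N -> T) :
  let rho := 1 - (em / ep) ^+ 2 in
  `| (\prod_(p < n) lam G zeta p)^-1 * integ mu' (QNpn q G zeta 0 n phi)
     - integ mu' (hN q G zeta 0 n) * etaN zeta n phi |
    <= 2 * supnorm phi * rho ^+ n * (ep / em)
  /\
  `| integ mu' (QNpn q G zeta 0 n phi) / integ mu' (QNpn q G zeta 0 n (fun=> 1))
     - etaN zeta n phi |
    <= 2 * supnorm phi * rho ^+ n * (ep / em) ^+ 2.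
Proof.
exact: (@main d T R q G N zeta em ep N_ge1 hem q_bnd G_pos mq2 mu' n hn phi mphi bphi).
Qed.
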